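(* If $\mathbf M\in\mathcal M_1$ and $\mathbf F(\mathbf s)\neq\mathbf M\mathbf s$, then $F_i(n;\mathbf s)\to1$ as $n\to\infty$, uniformly in $i\in\mathbb N$ and $\mathbf s\in(0,1]^{\mathbb N}$.
   Context: A GWBP/$\infty$ has types $\mathbb N=\{1,2,\dots\}$. Each particle lives one unit of time; a type-$i$ particle produces, independently of everything else, a random vector $\mathbf Z_i=(Z_{ij})_{j\in\mathbb N}$ of children, with $Z_i:=\sum_jZ_{ij}<\infty$ a.s. $\mathbf Z_i(n)=(Z_{ij}(n))_j$ is the generation-$n$ population from one type-$i$ particle. $F_i(n;\mathbf s)=\mathbb E\prod_js_j^{Z_{ij}(n)}$, $F_i(\mathbf s)=F_i(1;\mathbf s)$; ''$\mathbf F(\mathbf s)\neq\mathbf M\mathbf s$'' means it is not true that $F_i(\mathbf s)=\sum_jM_{ij}s_j$ for all $i,\mathbf s$. Mean matrix $\mathbf M=(M_{ij})$, $M_{ij}=\mathbb EZ_{ij}$, $M^{(n)}_{ij}=\mathbb EZ_{ij}(n)$, $M_i=\sum_jM_{ij}$. Irreducible: for all $i,j$ some $M^{(n)}_{ij}>0$; aperiodic: gcd of such $n$ is 1; then $\lim_n(M^{(n)}_{ij})^{1/n}=1/R$ for a common $R$. $\mathbf M\in\mathcal M_1$ means: (i) irreducible, aperiodic, $R=1$, 1-recurrent ($\sum_nM^{(n)}_{ij}=\infty$) and 1-positive ($\lim_nM^{(n)}_{ij}>0$ for all $i,j$); then there are positive eigenvectors $\mathbf v\mathbf M=\mathbf v$,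 $\mathbf M\mathbf u^T=\mathbf u^T$, unique up to positive multiples, normalized with $\sum_jv_ju_j=1$; (ii) $\sum_jv_j=1$ and $\sup_iu_i<\infty$; (iii) $\lim_{N\to\infty}\sup_iM_i^{-1}\sum_{j>N}M_{ij}=0$ and $\lim_{K\to\infty}\sup_iM_i^{-1}\mathbb E[Z_i;Z_i>K]=0$. *)

(* Defs.v *)
From HB Require Import structures.
From mathcomp Require Import all_boot all_order all_algebra.
From mathcomp Require Import all_classical all_reals all_analysis.
Set Implicit Arguments. Unset Strict Implicit. Unset Printing Implicit Defensive.
Import Order.TTheory GRing.Theory Num.Theory numFieldNormedType.Exports.
Local Open Scope classical_set_scope.
Local Open Scope ring_scope.

(* Types are indexed by nat = {0,1,2,...} (relabelling of {1,2,...}).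
   An offspring vector is z : nat -> nat (z j = number of type-j children).
   The offspring law of the process is p : nat -> (nat -> nat) -> R,
   p i z = P(Z_i = z). *)

Section GWBP.
Variable R : realType.

(* p is a family of probability mass functions on offspring vectors,
   concentrated on vectors with finitely many children (Z_i < oo a.s.). *)
Definition offspring_law (p : nat -> (nat -> nat) -> R) : Prop :=
  [/\ (forall i z, 0 <= p i z),
      (forall i z, p i z != 0 -> finite_set [set j | z j != 0%N]) &
      (forall i, (\esum_(z in [set: nat -> nat]) (p i z)%:E = 1)%E)].

(* prod_j s_j ^ z_j  (the partial products are eventually constant when z
   has finite support) *)
Definition mono (s : nat -> R) (z : nat -> nat) : R :=
  limn (fun N : nat => (\prod_(j < N) s j ^+ z j : R)).

Definition Fgen (p : nat -> (nat -> nat) -> R) (s : nat -> R) (i : nat) : R :=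
  fine (\esum_(z in [set: nat -> nat]) (p i z * mono s z)%:E)%E.

Definition Fiter (p : nat -> (nat -> nat) -> R) (n : nat) (s : nat -> R)
  : nat -> R := iter n (Fgen p) s.

Definition total (z : nat -> nat) : \bar R :=
  (\esum_(j in [set: nat]) (z j)%:R%:E)%E.

Definition Mmean (p : nat -> (nat -> nat) -> R) (i j : nat) : \bar R :=
  (\esum_(z in [set: nat -> nat]) (p i z)%:E * (z j)%:R%:E)%E.

Definition Mrow (p : nat -> (nat -> nat) -> R) (i : nat) : \bar R :=
  (\esum_(j in [set: nat]) Mmean p i j)%E.

Fixpoint Mpow (p : nat -> (nat -> nat) -> R) (n : nat) (i j : nat) : \bar R :=
  match n with
  | 0%N => ((i == j)%:R)%:E
  | n'.+1 => (\esum_(k in [set: nat]) Mpow p n' i k * Mmean p k j)%E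
  end.

Definition trunc_mean (p : nat -> (nat -> nat) -> R) (i K : nat) : \bar R :=
  (\esum_(z in [set z | K%:R%:E < total z]) (p i z)%:E * total z)%E.

Definition irreducible (p : nat -> (nat -> nat) -> R) : Prop :=
  forall i j, exists n, (0 < n)%N /\ (0 < Mpow p n i j)%E.

Definition aperiodic (p : nat -> (nat -> nat) -> R) : Prop :=
  forall i d, (forall n, (0 < n)%N -> (0 < Mpow p n i i)%E -> (d %| n)%N) ->
    d = 1%N.

(* lim_n (M^(n)_ij)^(1/n) = 1/R with R = 1 *)
Definition radius_one (p : nat -> (nat -> nat) -> R) : Prop :=
  forall i j,
    (\forall n \near \oo, (Mpow p n i j < +oo)%E) /\
    ((fun n : nat => fine (Mpow p n i j) `^ (n%:R)^-1) @ \oo --> (1 : R)).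

Definition one_recurrent (p : nat -> (nat -> nat) -> R) : Prop :=
  forall i j, (\esum_(n in [set: nat]) Mpow p n i j = +oo)%E.

Definition one_positive (p : nat -> (nat -> nat) -> R) : Prop :=
  forall i j, exists l : \bar R,
    (0 < l)%E /\ ((fun n => Mpow p n i j) @ \oo --> l).

Definition class_M1 (p : nat -> (nat -> nat) -> R) : Prop :=
  (forall i, (Mrow p i < +oo)%E) /\
  [/\ irreducible p, aperiodic p, radius_one p, one_recurrent p
    & one_positive p] /\
  (exists v u : nat -> R,
     [/\ (forall j, 0 < v j), (forall i, 0 < u i),
         (forall j, (\esum_(i in [set: nat]) (v i)%:E * Mmean p i j)%E = (v j)%:E),
         (forall i, (\esum_(j in [set: nat]) Mmean p i j * (u j)%:E)%E = (u i)%:E)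
       & [/\ (\esum_(j in [set: nat]) (v j * u j)%:E = 1)%E,
             (\esum_(j in [set: nat]) (v j)%:E = 1)%E
           & exists B : R, forall i, u i <= B]]) /\
  (forall eps : R, 0 < eps -> exists N0 : nat, forall N, (N0 <= N)%N ->
     forall i, (\esum_(j in [set j | (N < j)%N]) Mmean p i j <= eps%:E * Mrow p i)%E) /\
  (forall eps : R, 0 < eps -> exists K0 : nat, forall K, (K0 <= K)%N ->
     forall i, (trunc_mean p i K <= eps%:E * Mrow p i)%E).

Definition F_linear (p : nat -> (nat -> nat) -> R) : Prop :=
  forall s : nat -> R, (forall j, 0 <= s j <= 1) ->
    forall i, (Fgen p s i)%:E = (\esum_(j in [set: nat]) Mmean p i j * (s j)%:E)%E.

End GWBP.

(* Main.v *)
Require Import Defs.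
From HB Require Import structures.
From mathcomp Require Import all_boot all_order all_algebra.
From mathcomp Require Import all_classical all_reals all_analysis.
From mathcomp Require Import lra ring.
Import Order.TTheory GRing.Theory Num.Theory.
Local Open Scope ring_scope.

Section Gen.
Import numFieldNormedType.Exports.
Local Open Scope classical_set_scope.
Local Open Scope ereal_scope.
Variable R : realType.

Lemma esumZl_le (T : choiceType) (I : set T) (c : R) (a : T -> \bar R) :
  (0 <= c)%R -> (forall i, 0 <= a i) ->
  \esum_(i in I) (c%:E * a i) <= c%:E * \esum_(i in I) a i.
Proof.
move=> c0 a0; apply: ge_ereal_sup => _ [X [finX XI] <-] /=.
rewrite -ge0_mule_fsumr //; apply: lee_wpmul2l; first by rewrite lee_fin.
by apply: ereal_sup_ubound; exists X.
Qed.

Lemma esumZl (T : choiceType) (I : set T) (c : R) (a : T -> \bar R) :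
  (0 <= c)%R -> (forall i, 0 <= a i) ->
  \esum_(i in I) (c%:E * a i) = c%:E * \esum_(i in I) a i.
Proof.
move=> c0 a0; have [->|cn0] := eqVneq c 0%R.
  by rewrite mul0e esum1// => i _; rewrite mul0e.
apply/eqP; rewrite eq_le esumZl_le //=.
have ci0 : (0 <= c^-1)%R by rewrite invr_ge0.
have := @esumZl_le T I c^-1 (fun i => c%:E * a i) ci0.
have ca0 : forall i, 0 <= c%:E * a i by move=> i; rewrite mule_ge0// lee_fin.
move=> /(_ ca0) H.
have E : \esum_(i in I) (c^-1%:E * (c%:E * a i)) = \esum_(i in I) a i.
  by apply: eq_esum => i _; rewrite muleA -EFinM mulVf // mul1e.
rewrite E in H.
have c0' : 0 <= c%:E by rewrite lee_fin.
have H2 := lee_wpmul2l c0' H.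
apply: (le_trans H2).
by rewrite muleA -EFinM mulfV // mul1e.
Qed.

Lemma esumZr (T : choiceType) (I : set T) (c : R) (a : T -> \bar R) :
  (0 <= c)%R -> (forall i, 0 <= a i) ->
  \esum_(i in I) (a i * c%:E) = (\esum_(i in I) a i) * c%:E.
Proof.
move=> c0 a0; rewrite [RHS]muleC -esumZl //; apply: eq_esum => i _; exact: muleC.
Qed.

Lemma esum_swap (T1 T2 : choiceType) (a : T1 -> T2 -> \bar R) :
  (forall i j, 0 <= a i j) ->
  \esum_(i in [set: T1]) \esum_(j in [set: T2]) a i j =
  \esum_(j in [set: T2]) \esum_(i in [set: T1]) a i j.
Proof.
move=> a0; rewrite (@esum_esum _ _ _ _ (fun=> setT)) //.
rewrite (@esum_esum _ _ _ _ (fun=> setT)) //.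
rewrite (reindex_esum (setT `*`` (fun=> setT)) _ (fun x => (x.2, x.1)))//.
split=> //=.
- by move=> [i1 i2] [j1 j2] /= _ _ [] -> ->.
- by move=> [i1 i2] _ /=; exists (i2, i1).
Qed.

Lemma esum_ge1 (T : choiceType) (I : set T) (a : T -> \bar R) t :
  I t -> (forall i, I i -> 0 <= a i) -> a t <= \esum_(i in I) a i.
Proof.
move=> It a0; apply: esum_ge; exists [set t].
  by split; [exact: finite_set1 | by move=> ? ->].
by rewrite fsbig_set1.
Qed.

Lemma esum_sub (T : choiceType) (I J : set T) (a : T -> \bar R) :
  I `<=` J -> (forall i, J i -> 0 <= a i) ->
  \esum_(i in I) a i <= \esum_(i in J) a i.
Proof.
move=> IJ a0; apply: ge_ereal_sup => _ [X [finX XI] <-] /=.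
apply: ereal_sup_ubound; exists X => //; split => //; exact: subset_trans XI IJ.
Qed.

Lemma esum_gt0 (T : choiceType) (I : set T) (a : T -> \bar R) :
  0 < \esum_(i in I) a i -> exists i, I i /\ a i != 0.
Proof.
move=> H; apply: contrapT => nE.
suff : \esum_(i in I) a i = 0 by move=> E; rewrite E ltxx in H.
apply: esum1 => i Ii; apply/eqP; apply: contrapT => ai.
by apply: nE; exists i; split => //; apply/negP.
Qed.

Lemma fin_bound (z : nat -> nat) :
  finite_set [set j | z j != 0%N] -> exists N, forall j, (N <= j)%N -> z j = 0%N.
Proof.
move=> finA; exists (\max_(j <- (finmap.enum_fset (fset_set [set j | z j != 0%N]))) j).+1 => j Nj.
apply/eqP; apply: contraTT Nj => zj; rewrite -ltnNge ltnS.
apply: (@leq_bigmax_seq _ _ xpredT id) => //.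
by rewrite in_fset_set // inE.
Qed.

Lemma esum_fin_nat (f : nat -> R) N :
  (forall j, (0 <= f j)%R) -> (forall j, (N <= j)%N -> f j = 0%R) ->
  \esum_(j in [set: nat]) (f j)%:E = (\sum_(j < N) f j)%:E.
Proof.
move=> f0 fN; rewrite -nneseries_esumT; last by move=> n; rewrite lee_fin.
apply: lim_near_cst; first exact: ereal_hausdorff.
exists N => // n /= Nn.
rewrite -sumEFin (big_cat_nat (leq0n N) Nn) /= big_mkord.
rewrite [X in (_ + X)%R]big1_seq ?addr0 // => j /andP[_].
by rewrite mem_iota => /andP[/fN ->].
Qed.

End Gen.
Section Real.
Variable R : realType.

Lemma e1 (t : R) k : 0 <= t <= 1 -> 0 <= t ^+ k <= 1.
Proof. by move=> /andP[t0 t1]; rewrite exprn_ge0 // exprn_ile1. Qed.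

Lemma e2 (t : R) k : 0 <= t <= 1 -> 1 - t ^+ k <= k%:R * (1 - t).
Proof.
move=> ht; elim: k => [|k IH]; first by rewrite expr0 subrr mul0r.
have := @e1 t k ht; move: ht => /andP[t0 t1] /andP[a0 a1].
rewrite exprSr -natr1 mulrDl mul1r.
have : t ^+ k * (1 - t) <= 1 - t by rewrite ler_piMl // subr_ge0.
nra.
Qed.

Lemma e3 (t : R) k : 0 <= t <= 1 -> (1 <= k)%N -> t ^+ k <= t.
Proof.
move=> /andP[t0 t1]; case: k => // k _.
rewrite exprS ler_piMr //; exact: exprn_ile1.
Qed.

Lemma e4 (t : R) k : 0 <= t <= 1 -> (2 <= k)%N ->
  (1 - t) ^+ 2 <= k%:R * (1 - t) - (1 - t ^+ k).
Proof.
move=> ht; case: k => // [[|k]] // _.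
elim: k => [|k IH].
  rewrite !expr2; have -> : (2%:R : R) = 1 + 1 by []; nra.
have := @e1 t k.+2 ht; move: ht => /andP[t0 t1] /andP[a0 a1].
rewrite [t ^+ k.+3]exprSr -[k.+3]addn1 natrD mulrDl mul1r.
have : t ^+ k.+2 * t <= t ^+ k.+2 by rewrite ler_piMr.
nra.
Qed.


Definition two_kids (z : nat -> nat) (j k : nat) : bool :=
  if j == k then (2 <= z j)%N else (1 <= z j)%N && (1 <= z k)%N.

Lemma two_kidsC z j k : two_kids z j k = two_kids z k j.
Proof. by rewrite /two_kids eq_sym; case: eqP => [->|]; rewrite // andbC. Qed.

Section Prod.
Variable s : nat -> R.
Hypothesis s01 : forall j, 0 <= s j <= 1.

Definition Pp N (z : nat -> nat) := \prod_(j < N) s j ^+ z j.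
Definition Ss N (z : nat -> nat) := \sum_(j < N) (z j)%:R * (1 - s j).

Lemma Pp01 N z : 0 <= Pp N z <= 1.
Proof.
rewrite /Pp; elim: N => [|N IH]; first by rewrite big_ord0 ler01 lexx.
rewrite big_ord_recr /=; have := @e1 (s N) (z N) (s01 N).
move: IH => /andP[a0 a1] /andP[b0 b1]; rewrite mulr_ge0 //=.
by rewrite mulr_ile1.
Qed.

Lemma Ss0 N z : 0 <= Ss N z.
Proof.
rewrite /Ss sumr_ge0 // => j _; rewrite mulr_ge0 // subr_ge0.
by case/andP: (s01 j).
Qed.

Lemma PpS N z : Pp N.+1 z = Pp N z * s N ^+ z N.
Proof. by rewrite /Pp big_ord_recr. Qed.

Lemma SsS N z : Ss N.+1 z = Ss N z + (z N)%:R * (1 - s N).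
Proof. by rewrite /Ss big_ord_recr. Qed.

Lemma b2 N z : 1 - Pp N z <= Ss N z.
Proof.
elim: N => [|N IH]; first by rewrite /Pp /Ss big_ord0 big_ord0 subrr.
rewrite PpS SsS.
have := Pp01 N z; have := @e1 (s N) (z N) (s01 N).
have := @e2 (s N) (z N) (s01 N).
move: IH; move: (s N ^+ z N) (Pp N z) (Ss N z) ((z N)%:R * (1 - s N)) => A P S B.
move=> h1 h2 /andP[a0 a1] /andP[p0 p1].
have h : 0 <= (1 - P) * (1 - A) by rewrite mulr_ge0 // subr_ge0.
lra.
Qed.

Lemma b3 N z m : (m < N)%N -> (1 <= z m)%N -> Pp N z <= s m.
Proof.
elim: N => [//|N IH]; rewrite ltnS leq_eqVlt => /orP[/eqP->|mN] zm.
  rewrite PpS; have := Pp01 N z; have := @e3 (s N) (z N) (s01 N) zm.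
  have := @e1 (s N) (z N) (s01 N).
  move: (s N ^+ z N) (Pp N z) => A P /andP[a0 a1] h /andP[p0 p1].
  have h' : 0 <= (1 - P) * A by rewrite mulr_ge0 // subr_ge0.
  lra.
rewrite PpS; have := IH mN zm; have := Pp01 N z; have := @e1 (s N) (z N) (s01 N).
move: (s N ^+ z N) (Pp N z) => A P /andP[a0 a1] /andP[p0 p1] h.
have h' : 0 <= P * (1 - A) by rewrite mulr_ge0 // subr_ge0.
lra.
Qed.

Lemma b4 N z j k : (j < N)%N -> (k < N)%N -> two_kids z j k ->
  (1 - s j) * (1 - s k) <= Ss N z - (1 - Pp N z).
Proof.
elim: N j k => [//|N IH] j k.
have hA := @e1 (s N) (z N) (s01 N).
have hB := @e2 (s N) (z N) (s01 N).
have hP := Pp01 N z; have hg := b2 N z.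
have hsN := s01 N.
rewrite PpS SsS.
have key : forall j k, (j < N)%N -> (k = N) -> two_kids z j k ->
   (1 - s j) * (1 - s k) <= Ss N z + (z N)%:R * (1 - s N) - (1 - Pp N z * s N ^+ z N).
  move=> j' k' j'N -> tk.
  have zj : (1 <= z j')%N.
    by move: tk; rewrite /two_kids (ltn_eqF j'N) => /andP[].
  have zN : (1 <= z N)%N.
    by move: tk; rewrite /two_kids (ltn_eqF j'N) => /andP[].
  have hPj := @b3 N z j' j'N zj; have h3 := @e3 (s N) (z N) hsN zN.
  have hsj := s01 j'.
  move: hA hB hP hg hPj h3 hsj hsN.
  move: (s j') (s N) (s N ^+ z N) (Pp N z) (Ss N z) ((z N)%:R * (1 - s N)) => a b A P S B.
  move=> /andP[a0 a1] hB /andP[p0 p1] hg hPj h3 /andP[a0' a1'] /andP[b0 b1].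
  have q1 : 0 <= (a - P) * (1 - A) by rewrite mulr_ge0 // subr_ge0.
  have q2 : 0 <= (1 - a) * (b - A) by rewrite mulr_ge0 // subr_ge0.
  have q3 : (1 - a) * (1 - b) = (1 - a) * (1 - A) - (1 - a) * (b - A) by ring.
  have q4 : (a - P) * (1 - A) = (1 - P) * (1 - A) - (1 - a) * (1 - A) by ring.
  have q5 : (1 - P) * (1 - A) = 1 - A - P + P * A by ring.
  lra.
move=> hj hk tk.
have hj' : j = N \/ (j < N)%N.
  by move: hj; rewrite ltnS leq_eqVlt => /orP[/eqP|]; [left|right].
have hk' : k = N \/ (k < N)%N.
  by move: hk; rewrite ltnS leq_eqVlt => /orP[/eqP|]; [left|right].
case: hj' => [?|jN]; case: hk' => [?|kN]; subst.
- have zN : (2 <= z N)%N by move: tk; rewrite /two_kids eqxx.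
  have h4 := @e4 (s N) (z N) hsN zN; rewrite expr2 in h4.
  move: hA hB hP hg h4 hsN.
  move: (s N ^+ z N) (Pp N z) (Ss N z) ((z N)%:R * (1 - s N)) ((1 - s N) * (1 - s N)) => A P S B C.
  move=> /andP[a0 a1] hB /andP[p0 p1] hg h4 _.
  have q1 : 0 <= (1 - P) * (1 - A) by rewrite mulr_ge0 // subr_ge0.
  have q5 : (1 - P) * (1 - A) = 1 - A - P + P * A by ring.
  lra.
- rewrite mulrC; apply: key => //; by rewrite two_kidsC.
- exact: key.
- have := IH j k jN kN tk.
  move: hA hB hP hg hsN.
  move: (s N ^+ z N) (Pp N z) (Ss N z) ((z N)%:R * (1 - s N)) ((1 - s j) * (1 - s k)) => A P S B C.
  move=> /andP[a0 a1] hB /andP[p0 p1] hg _ h.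
  have q1 : 0 <= (1 - P) * (1 - A) by rewrite mulr_ge0 // subr_ge0.
  have q5 : (1 - P) * (1 - A) = 1 - A - P + P * A by ring.
  lra.
Qed.

Lemma b5 N z : (forall j k, ~~ two_kids z j k) -> 1 - Pp N z = Ss N z.
Proof.
move=> ntk; elim: N => [|N IH]; first by rewrite /Pp /Ss !big_ord0 subrr.
rewrite PpS SsS.
have [zN0|zNp] := eqVneq (z N) 0%N.
  by rewrite zN0 expr0 mulr1 mul0r addr0.
have zN1 : z N = 1%N.
  have := ntk N N; rewrite /two_kids eqxx.
  by move: zNp; case: (z N) => [|[|]].
have z0 : forall l, (l < N)%N -> z l = 0%N.
  move=> l lN; have := ntk l N; rewrite /two_kids (ltn_eqF lN) zN1 andbT.
  by case: (z l).
have P1 : Pp N z = 1.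
  by rewrite /Pp big1 // => l _; rewrite z0 // expr0.
have S0 : Ss N z = 0.
  by rewrite /Ss big1 // => l _; rewrite z0 // mul0r.
by rewrite P1 S0 zN1 expr1 mul1r add0r mul1r.
Qed.

Lemma Pp_mono (t : nat -> R) N z : (forall j, s j <= t j) -> Pp N z <= \prod_(j < N) t j ^+ z j.
Proof.
move=> st; rewrite /Pp; apply: ler_prod => j _.
rewrite exprn_ge0 /=; last by case/andP: (s01 j).
by rewrite lerXn2r // ?nnegrE; [case/andP: (s01 j)| apply: le_trans (st j); case/andP: (s01 j)].
Qed.

End Prod.
End Real.
Arguments e1 {R}. Arguments e2 {R}. Arguments e3 {R}. Arguments e4 {R}.
Arguments Pp {R}. Arguments Ss {R}. Arguments Pp01 {R}. Arguments Ss0 {R}.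
Arguments PpS {R}. Arguments SsS {R}. Arguments b2 {R}. Arguments b3 {R}.
Arguments b4 {R}. Arguments b5 {R}. Arguments Pp_mono {R}.
Arguments esumZl {R}. Arguments esumZr {R}. Arguments esum_swap {R}.
Arguments esum_ge1 {R}. Arguments esum_sub {R}. Arguments esum_gt0 {R}.
Arguments esum_fin_nat {R}.

Section GW.
Import numFieldNormedType.Exports.
Local Open Scope classical_set_scope.
Variable R : realType.
Variable p : nat -> (nat -> nat) -> R.
Hypothesis p0 : forall i z, 0 <= p i z.
Hypothesis pfin : forall i z, p i z != 0 -> finite_set [set j | z j != 0%N].
Hypothesis psum : forall i, (\esum_(z in [set: nat -> nat]) (p i z)%:E = 1)%E.

Definition unit01 (s : nat -> R) := forall j, 0 <= s j <= 1.

Lemma monoE (s : nat -> R) z N : (forall j, (N <= j)%N -> z j = 0%N) -> mono s z = Pp s N z.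
Proof.
move=> zN; rewrite /mono; apply: lim_near_cst; first exact: norm_hausdorff.
exists N => // n /= Nn; rewrite /Pp.
rewrite -!(big_mkord xpredT (fun j => s j ^+ z j)) (big_cat_nat (leq0n N) Nn) /=.
rewrite [X in (_ * X)%R]big1_seq ?mulr1 // => j /andP[_].
by rewrite mem_iota => /andP[/zN ->].
Qed.

Lemma bound_up z N M : (forall j, (N <= j)%N -> z j = 0%N) -> (N <= M)%N ->
  forall j, (M <= j)%N -> z j = 0%N.
Proof. by move=> h NM j Mj; apply: h; exact: leq_trans Mj. Qed.

Lemma pm01 (s : nat -> R) i z : unit01 s -> 0 <= p i z * mono s z <= p i z.
Proof.
move=> s01; have [->|pn0] := eqVneq (p i z) 0; first by rewrite mul0r lexx.
have [N hN] := @fin_bound z (pfin i z pn0).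
rewrite (@monoE s z N hN); have /andP[a0 a1] := Pp01 s s01 N z.
by rewrite mulr_ge0 // ler_piMr.
Qed.


Lemma EX_bnd (s : nat -> R) i : unit01 s ->
  (0 <= \esum_(z in [set: nat -> nat]) (p i z * mono s z)%:E)%E /\
  (\esum_(z in [set: nat -> nat]) (p i z * mono s z)%:E <= 1)%E.
Proof.
move=> s01; split.
  by apply: esum_ge0 => z _; rewrite lee_fin; case/andP: (pm01 s i z s01).
rewrite -(psum i); apply: le_esum => z _; rewrite lee_fin.
by case/andP: (pm01 s i z s01).
Qed.

Lemma Fgen_E (s : nat -> R) i : unit01 s ->
  (Fgen p s i)%:E = (\esum_(z in [set: nat -> nat]) (p i z * mono s z)%:E)%E.
Proof.
move=> s01; have [h0 h1] := EX_bnd s i s01; rewrite /Fgen fineK //.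
by rewrite ge0_fin_numE // (le_lt_trans h1) // ltry.
Qed.

Lemma Fgen01 (s : nat -> R) i : unit01 s -> 0 <= Fgen p s i <= 1.
Proof.
move=> s01; have [h0 h1] := EX_bnd s i s01; rewrite -Fgen_E // in h0 h1.
by rewrite -!lee_fin h0 h1.
Qed.

Lemma Fgen_unit (s : nat -> R) : unit01 s -> unit01 (Fgen p s).
Proof. by move=> s01 i; exact: Fgen01. Qed.

Lemma Fgen_mono (s t : nat -> R) i : unit01 s -> unit01 t ->
  (forall j, s j <= t j) -> Fgen p s i <= Fgen p t i.
Proof.
move=> s01 t01 st; rewrite -lee_fin !Fgen_E //; apply: le_esum => z _.
rewrite lee_fin; have [->|pn0] := eqVneq (p i z) 0; first by rewrite !mul0r.
have [N hN] := @fin_bound z (pfin i z pn0).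
rewrite (@monoE s z N hN) (@monoE t z N hN) ler_wpM2l //.
exact: (Pp_mono s s01 t N z st).
Qed.

Lemma one_minus_F (s : nat -> R) i : unit01 s ->
  ((1 - Fgen p s i)%:E = \esum_(z in [set: nat -> nat]) (p i z * (1 - mono s z))%:E)%E.
Proof.
move=> s01.
have hY0 : forall z, (0 <= (p i z * (1 - mono s z))%:E)%E.
  move=> z; rewrite lee_fin mulrBr mulr1 subr_ge0.
  by case/andP: (pm01 s i z s01).
have E1 : (\esum_(z in [set: nat -> nat]) (p i z)%:E =
   \esum_(z in [set: nat -> nat]) ((p i z * mono s z)%:E + (p i z * (1 - mono s z))%:E))%E.
  by apply: eq_esum => z _; rewrite -EFinD; congr (_%:E); ring.
rewrite esumD in E1; first last.
- by move=> z _; exact: hY0.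
- by move=> z _; rewrite lee_fin; case/andP: (pm01 s i z s01).
rewrite psum -Fgen_E // in E1.
by rewrite EFinB E1 (addeC (Fgen p s i)%:E) addeK.
Qed.

Lemma Mx_E (x : nat -> R) i : (forall j, 0 <= x j) ->
  (\esum_(j in [set: nat]) (Mmean p i j * (x j)%:E) =
   \esum_(z in [set: nat -> nat]) ((p i z)%:E *
       \esum_(j in [set: nat]) ((z j)%:R * x j)%:E))%E.
Proof.
move=> x0.
transitivity (\esum_(j in [set: nat]) \esum_(z in [set: nat -> nat])
                 ((p i z)%:E * ((z j)%:R * x j)%:E))%E.
  apply: eq_esum => j _; rewrite /Mmean -esumZr //; last first.
    by move=> z; rewrite mule_ge0 // lee_fin.
  by apply: eq_esum => z _; rewrite EFinM muleA.
rewrite esum_swap; last by move=> j z; rewrite mule_ge0 // lee_fin ?mulr_ge0 // ?x0.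
apply: eq_esum => z _; rewrite esumZl //.
by move=> j; rewrite lee_fin mulr_ge0.
Qed.

Lemma key_ineq (s : nat -> R) i z0 (c : R) : unit01 s -> 0 <= c ->
  (p i z0 != 0 -> forall N, (forall j, (N <= j)%N -> z0 j = 0%N) ->
      c <= Ss s N z0 - (1 - Pp s N z0)) ->
  ((1 - Fgen p s i + p i z0 * c)%:E <=
     \esum_(j in [set: nat]) (Mmean p i j * (1 - s j)%:E))%E.
Proof.
move=> s01 c0 hc.
have x0 : forall j, 0 <= 1 - s j by move=> j; rewrite subr_ge0; case/andP: (s01 j).
rewrite Mx_E //.
have pt : forall z, ((p i z * (1 - mono s z))%:E +
     (if z == z0 then (p i z0 * c)%:E else 0) <=
     (p i z)%:E * \esum_(j in [set: nat]) ((z j)%:R * (1 - s j))%:E)%E.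
  move=> z; have [pz|pn0] := eqVneq (p i z) 0.
    rewrite pz mul0r mul0e add0e; case: eqP => [e|_] //.
    by rewrite -e pz mul0r.
  have [N hN] := @fin_bound z (pfin i z pn0).
  rewrite (@monoE s z N hN) (@esum_fin_nat _ _ N); first last.
  - by move=> j /hN ->; rewrite mul0r.
  - by move=> j; rewrite mulr_ge0.
  rewrite -/(Ss s N z).
  case: eqP => [e|_].
  - subst z; rewrite -EFinD -EFinM lee_fin -mulrDr ler_wpM2l //.
    have := hc pn0 N hN; lra.
  - rewrite adde0 -EFinM lee_fin ler_wpM2l //.
    have := b2 s s01 N z; lra.
apply: (@le_trans _ _ (\esum_(z in [set: nat -> nat]) ((p i z * (1 - mono s z))%:E +
     (if z == z0 then (p i z0 * c)%:E else 0)))%E); last first.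
  by apply: le_esum => z _; exact: pt.
have hY0 : forall z, (0 <= (p i z * (1 - mono s z))%:E)%E.
  move=> z; rewrite lee_fin mulrBr mulr1 subr_ge0.
  by case/andP: (pm01 s i z s01).
have hI0 : forall z, (0 <= (if z == z0 then (p i z0 * c)%:E else 0))%E.
  by move=> z; case: eqP => _ //; rewrite lee_fin mulr_ge0.
rewrite esumD; first last.
- by move=> z _; exact: hI0.
- by move=> z _; exact: hY0.
rewrite -one_minus_F // EFinD; apply: leeD2l.
have := esum_ge1 _ [set: nat -> nat] (fun z => if z == z0 then (p i z0 * c)%:E else 0)%E z0 I (fun z _ => hI0 z).
by rewrite eqxx.
Qed.

Lemma key_lower (s : nat -> R) i z m : unit01 s -> p i z != 0 -> (1 <= z m)%N ->
  p i z * (1 - s m) <= 1 - Fgen p s i.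
Proof.
move=> s01 pn0 zm; rewrite -lee_fin one_minus_F //.
have hY0 : forall z, (0 <= (p i z * (1 - mono s z))%:E)%E.
  move=> z'; rewrite lee_fin mulrBr mulr1 subr_ge0.
  by case/andP: (pm01 s i z' s01).
apply: le_trans (esum_ge1 _ [set: nat -> nat] _ z I (fun z _ => hY0 z)).
rewrite lee_fin ler_wpM2l // lerB //.
have [N hN] := @fin_bound z (pfin i z pn0).
have hM := @bound_up z N (maxn N m.+1) hN (leq_maxl _ _).
rewrite (@monoE s z _ hM); apply: b3 => //.
by rewrite leq_max ltnSn orbT.
Qed.

Lemma caseB_eq (s : nat -> R) i : unit01 s ->
  (forall z, p i z != 0 -> forall j k, ~~ two_kids z j k) ->
  ((1 - Fgen p s i)%:E = \esum_(j in [set: nat]) (Mmean p i j * (1 - s j)%:E))%E.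
Proof.
move=> s01 ntk.
have x0 : forall j, 0 <= 1 - s j by move=> j; rewrite subr_ge0; case/andP: (s01 j).
rewrite Mx_E // one_minus_F //; apply: eq_esum => z _.
have [pz|pn0] := eqVneq (p i z) 0; first by rewrite pz mul0r mul0e.
have [N hN] := @fin_bound z (pfin i z pn0).
rewrite (@monoE s z N hN) (@esum_fin_nat _ _ N); first last.
- by move=> j /hN ->; rewrite mul0r.
- by move=> j; rewrite mulr_ge0.
by rewrite -/(Ss s N z) -EFinM (b5 s N z (ntk z pn0)).
Qed.


Definition zero : nat -> R := fun _ => 0.
Definition q n j := 1 - Fiter p n zero j.

Lemma zero01 : unit01 zero.
Proof. by move=> j; rewrite /zero lexx ler01. Qed.

Lemma FiterS n s : Fiter p n.+1 s = Fgen p (Fiter p n s).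
Proof. by []. Qed.

Lemma Fiter01 n s : unit01 s -> unit01 (Fiter p n s).
Proof.
move=> s01; elim: n => [//|n IH]; rewrite FiterS; exact: Fgen_unit.
Qed.

Lemma Fiter_mono n s : unit01 s -> forall j, Fiter p n zero j <= Fiter p n s j.
Proof.
move=> s01; elim: n => [|n IH] j.
  by rewrite /= /zero; case/andP: (s01 j).
rewrite !FiterS; apply: Fgen_mono.
- exact: (Fiter01 n zero zero01).
- exact: (Fiter01 n s s01).
- exact: IH.
Qed.

Lemma Fiter_incr n j : Fiter p n zero j <= Fiter p n.+1 zero j.
Proof.
elim: n j => [|n IH] j.
  by rewrite /= /zero; case/andP: (Fgen01 zero j zero01).
rewrite (FiterS n.+1) (FiterS n); apply: Fgen_mono.
- exact: (Fiter01 n zero zero01).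
- exact: (Fiter01 n.+1 zero zero01).
- exact: IH.
Qed.

Lemma q01 n j : 0 <= q n j <= 1.
Proof.
rewrite /q; have /andP[a b] := Fiter01 n zero zero01 j.
by rewrite subr_ge0 b /= lerBlDr lerDl.
Qed.

Lemma q_decr m n j : (m <= n)%N -> q n j <= q m j.
Proof.
move=> mn; rewrite /q lerB //.
elim: n mn => [|n IH]; first by rewrite leqn0 => /eqP ->.
rewrite leq_eqVlt => /orP[/eqP -> //|]; rewrite ltnS => /IH h.
exact: le_trans h (Fiter_incr n j).
Qed.

Lemma Mmean_ge0 i j : (0 <= Mmean p i j)%E.
Proof. by apply: esum_ge0 => z _; rewrite mule_ge0 // lee_fin. Qed.

Lemma q_step n i : ((q n.+1 i)%:E <= \esum_(j in [set: nat]) (Mmean p i j * (q n j)%:E))%E.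
Proof.
have s01 := Fiter01 n zero zero01.
have := @key_ineq (Fiter p n zero) i (fun _ => 0%N) 0 s01 (lexx 0).
rewrite mulr0 addr0; apply => _ N _.
have := b2 (Fiter p n zero) s01 N (fun _ => 0%N); lra.
Qed.

Definition dies l := forall d, 0 < d -> exists n, q n l < d.

Lemma dies_step l m : dies l -> (0 < Mmean p l m)%E -> dies m.
Proof.
move=> dl /esum_gt0 [z [_ hz]].
have pn0 : p l z != 0 by apply: contraNneq hz => ->; rewrite mul0e.
have zm : (1 <= z m)%N.
  by rewrite lt0n; apply: contraNneq hz => ->; rewrite mule0.
have pp : 0 < p l z by rewrite lt_def pn0 p0.
move=> d d0; have [n hn] := dl (d * p l z) (mulr_gt0 d0 pp).
exists n; have h1 := @key_lower (Fiter p n zero) l z m (Fiter01 n zero zero01) pn0 zm.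
rewrite -FiterS -/(q n.+1 l) -/(q n m) in h1.
have h2 := @q_decr n n.+1 l (leqnSn n).
have : q n m * p l z < d * p l z by rewrite mulrC; exact: le_lt_trans h1 (le_lt_trans h2 hn).
by rewrite ltr_pM2r.
Qed.

Lemma Mpow_ge0 n i j : (0 <= Mpow p n i j)%E.
Proof.
elim: n j => [|n IH] j /=; first by rewrite lee_fin ler0n.
by apply: esum_ge0 => k _; rewrite mule_ge0 // Mmean_ge0.
Qed.

Lemma dies_path l : dies l -> forall n m, (0 < Mpow p n l m)%E -> dies m.
Proof.
move=> dl; elim=> [|n IH] m /=.
  by rewrite lte_fin ltr0n lt0b => /eqP <-.
move=> /esum_gt0 [k [_ hk]].
have h1 : (0 < Mpow p n l k)%E.
  by rewrite lt_def Mpow_ge0 andbT; apply: contraNneq hk => ->; rewrite mul0e.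
have h2 : (0 < Mmean p k m)%E.
  by rewrite lt_def Mmean_ge0 andbT; apply: contraNneq hk => ->; rewrite mule0.
exact: dies_step (IH k h1) h2.
Qed.


Variables (v : nat -> R).
Hypothesis hv : forall j, 0 < v j.
Hypothesis hvM : forall j,
  (\esum_(i in [set: nat]) (v i)%:E * Mmean p i j)%E = (v j)%:E.
Hypothesis hsv : (\esum_(j in [set: nat]) (v j)%:E = 1)%E.

Lemma vM_sum (x : nat -> R) : (forall j, 0 <= x j) ->
  (\esum_(i in [set: nat]) ((v i)%:E *
      \esum_(j in [set: nat]) (Mmean p i j * (x j)%:E)) =
   \esum_(j in [set: nat]) (v j * x j)%:E)%E.
Proof.
move=> x0.
have v0 : forall i, 0 <= v i by move=> i; exact: ltW.
transitivity (\esum_(i in [set: nat]) \esum_(j in [set: nat])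
     ((v i)%:E * (Mmean p i j * (x j)%:E)))%E.
  apply: eq_esum => i _; rewrite esumZl //.
  by move=> j; rewrite mule_ge0 // ?Mmean_ge0 // lee_fin.
rewrite esum_swap; last first.
  by move=> i j; rewrite !mule_ge0 // ?Mmean_ge0 // lee_fin.
apply: eq_esum => j _.
transitivity ((\esum_(i in [set: nat]) ((v i)%:E * Mmean p i j)) * (x j)%:E)%E.
  rewrite -esumZr //; last by move=> i; rewrite mule_ge0 // ?Mmean_ge0 // lee_fin.
  by apply: eq_esum => i _; rewrite muleA.
by rewrite hvM -EFinM.
Qed.

Lemma a_bnd n : (0 <= \esum_(j in [set: nat]) (v j * q n j)%:E)%E /\
                (\esum_(j in [set: nat]) (v j * q n j)%:E <= 1)%E.
Proof.
split.
  apply: esum_ge0 => j _; rewrite lee_fin mulr_ge0 // ?(ltW (hv j)) //.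
  by case/andP: (q01 n j).
rewrite -hsv; apply: le_esum => j _; rewrite lee_fin ler_piMr ?(ltW (hv j)) //.
by case/andP: (q01 n j).
Qed.

Lemma tk_pos z j k : two_kids z j k -> (1 <= z j)%N /\ (1 <= z k)%N.
Proof.
rewrite /two_kids; case: eqP => [->|_]; last by case/andP.
by move=> h; split; apply: leq_trans h.
Qed.

Lemma a_step i0 z0 j k n : p i0 z0 != 0 -> two_kids z0 j k ->
  (\esum_(l in [set: nat]) (v l * q n.+1 l)%:E +
    (v i0 * p i0 z0 * (q n j * q n k))%:E <=
   \esum_(l in [set: nat]) (v l * q n l)%:E)%E.
Proof.
move=> pn0 tk.
have s01 := Fiter01 n zero zero01.
have q0 : forall m l, 0 <= q m l by move=> m l; case/andP: (q01 m l).
have v0 : forall i, 0 <= v i by move=> i; exact: ltW.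
have b0 : 0 <= q n j * q n k by rewrite mulr_ge0.
rewrite -(vM_sum (q n) (q0 n)).
have pt : forall i, ((v i * q n.+1 i)%:E +
    (if i == i0 then (v i0 * p i0 z0 * (q n j * q n k))%:E else 0) <=
    (v i)%:E * \esum_(l in [set: nat]) (Mmean p i l * (q n l)%:E))%E.
  move=> i; case: eqP => [->|_].
  - have cond : p i0 z0 != 0 -> forall N, (forall l, (N <= l)%N -> z0 l = 0%N) ->
        q n j * q n k <= Ss (Fiter p n zero) N z0 - (1 - Pp (Fiter p n zero) N z0).
      move=> _ N hN; case: (@tk_pos z0 j k tk) => zj zk.
      have jN : (j < N)%N.
        by rewrite ltnNge; apply/negP => /hN h; move: zj; rewrite h.
      have kN : (k < N)%N.
        by rewrite ltnNge; apply/negP => /hN h; move: zk; rewrite h.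
      exact: (b4 _ s01 N z0 j k jN kN tk).
    have K := @key_ineq (Fiter p n zero) i0 z0 (q n j * q n k) s01 b0 cond.
    have vi0 : (0 <= (v i0)%:E)%E by rewrite lee_fin.
    have K' := lee_wpmul2l vi0 K.
    apply: le_trans K'; rewrite -!EFinM -EFinD lee_fin /q FiterS le_eqVlt; apply/orP; left; apply/eqP; ring.
  - rewrite adde0; have vi : (0 <= (v i)%:E)%E by rewrite lee_fin.
    have K' := lee_wpmul2l vi (q_step n i); apply: le_trans K'.
    by rewrite -EFinM.
apply: (@le_trans _ _ (\esum_(i in [set: nat]) ((v i * q n.+1 i)%:E +
    (if i == i0 then (v i0 * p i0 z0 * (q n j * q n k))%:E else 0)))%E); last first.
  by apply: le_esum => i _; exact: pt.
have hI0 : forall i, (0 <= (if i == i0 then (v i0 * p i0 z0 * (q n j * q n k))%:E else 0))%E.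
  by move=> i; case: eqP => _ //; rewrite lee_fin !mulr_ge0.
rewrite esumD; first last.
- by move=> i _; exact: hI0.
- by move=> i _; rewrite lee_fin mulr_ge0.
apply: leeD2l.
have := esum_ge1 _ [set: nat] (fun i => if i == i0 then (v i0 * p i0 z0 * (q n j * q n k))%:E else 0)%E i0 I (fun i _ => hI0 i).
by rewrite eqxx.
Qed.


Lemma caseA i0 z0 j k : p i0 z0 != 0 -> two_kids z0 j k -> dies j \/ dies k.
Proof.
move=> pn0 tk.
have C0 : 0 < v i0 * p i0 z0 by rewrite mulr_gt0 // lt_def pn0 p0.
move: C0; set C := v i0 * p i0 z0 => C0.
have q0 : forall m l, 0 <= q m l by move=> m l; case/andP: (q01 m l).
pose A n := fine (\esum_(l in [set: nat]) (v l * q n l)%:E).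
have AE : forall n, \esum_(l in [set: nat]) (v l * q n l)%:E = (A n)%:E.
  move=> n; rewrite /A fineK //; case: (a_bnd n) => h0 h1.
  by rewrite ge0_fin_numE // (le_lt_trans h1) // ltry.
have A01 : forall n, 0 <= A n <= 1.
  by move=> n; have [h0 h1] := a_bnd n; rewrite AE in h0 h1; rewrite -!lee_fin h0 h1.
have st : forall n, A n.+1 + C * (q n j * q n k) <= A n.
  by move=> n; have := @a_step i0 z0 j k n pn0 tk; rewrite !AE -EFinD lee_fin.
have sum : forall N, A N + C * \sum_(n < N) (q n j * q n k) <= A 0.
  elim => [|N IH]; first by rewrite big_ord0 mulr0 addr0.
  rewrite big_ord_recr /= mulrDr; have := st N.
  move: (C * \sum_(i < N) (q i j * q i k)) (C * (q N j * q N k)) IH => X Y IH.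
  lra.
have bdec : forall n N, (n <= N)%N -> q N j * q N k <= q n j * q n k.
  by move=> n N nN; rewrite ler_pM ?q0 ?q_decr.
have key : forall N, N%:R * (C * (q N j * q N k)) <= 1.
  move=> N.
  have h1 : N%:R * (q N j * q N k) <= \sum_(n < N) (q n j * q n k).
    have e : \sum_(n < N) (q N j * q N k) = N%:R * (q N j * q N k).
      by rewrite sumr_const card_ord mulr_natl.
    rewrite -e.
    by apply: ler_sum => n _; apply: bdec; exact: ltnW.
  have h2 := sum N; have := A01 N; have := A01 0%N.
  rewrite mulrCA.
  have h3 := ler_wpM2l (ltW C0) h1.
  move: (C * (N%:R * (q N j * q N k))) (C * \sum_(n < N) (q n j * q n k)) h2 h3 => X Y.
  lra.
case: (boolp.pselect (dies j)) => [dj|ndj]; [by left|right].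
have [d [d0 hd]] : exists d, 0 < d /\ forall n, d <= q n j.
  apply: contrapT => H; apply: ndj => d d0; apply: contrapT => H2; apply: H.
  exists d; split => // n; rewrite leNgt; apply/negP => H3; apply: H2; exists n.
  exact: H3.
move=> e e0.
have Cde : 0 < C * d * e by apply: mulr_gt0 => //; apply: mulr_gt0.
have x0 : 0 <= (C * d * e)^-1 by rewrite invr_ge0; apply: ltW.
have := archi_boundP x0; set N := Num.bound _ => hN.
exists N.
have kN := key N.
have hb : d * q N k <= q N j * q N k by rewrite ler_wpM2r ?q0.
have h2 : N%:R * (C * (d * q N k)) <= 1.
  apply: le_trans kN; apply: ler_wpM2l; first exact: ler0n.
  by apply: ler_wpM2l; [exact: ltW | exact: hb].
have h1 : 1 < N%:R * (C * d * e).
  by move: hN; rewrite -[X in X < _]div1r ltr_pdivrMr.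
move: h1 h2; rewrite !mulrA.
have K0 : 0 <= N%:R * C * d by rewrite !mulr_ge0 // ltW.
move: K0; move: (N%:R * C * d) (q N k) => K x K0 h1 h2.
nra.
Qed.

Hypothesis hnl : ~ F_linear p.

Lemma exists_dies : exists l, dies l.
Proof.
case: (boolp.pselect (exists i z j k, p i z != 0 /\ two_kids z j k)) =>
  [[i [z [j [k [pn tk]]]]]|nE].
  by case: (@caseA i z j k pn tk) => h; [exists j|exists k].
exfalso; apply: hnl.
have ntk : forall i z, p i z != 0 -> forall j k, ~~ two_kids z j k.
  move=> i z pn j k; apply/negP => tk; apply: nE; by exists i, z, j, k.
pose m i := 1 - Fgen p zero i.
have hm : forall i, Mrow p i = (m i)%:E.
  move=> i; rewrite (caseB_eq zero i zero01 (ntk i)) /Mrow.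
  by apply: eq_esum => j _; rewrite /zero subr0 mule1.
have m01 : forall i, 0 <= m i <= 1.
  move=> i; rewrite /m; have /andP[a b] := Fgen01 zero i zero01.
  by rewrite subr_ge0 b /= lerBlDr lerDl.
have v0 : forall i, 0 <= v i by move=> i; exact: ltW.
have hsum : (\esum_(i in [set: nat]) (v i * m i)%:E = 1)%E.
  transitivity (\esum_(i in [set: nat]) ((v i)%:E *
      \esum_(j in [set: nat]) (Mmean p i j * (1:R)%:E)))%E.
    apply: eq_esum => i _; rewrite EFinM -hm /Mrow; congr (_ * _)%E.
    by apply: eq_esum => j _; rewrite mule1.
  rewrite (vM_sum (fun _ => 1) (fun _ => ler01)) -hsv.
  by apply: eq_esum => j _; rewrite mulr1.
have hm1 : forall i, m i = 1.
  have E1 : (\esum_(i in [set: nat]) (v i)%:E = \esum_(i in [set: nat])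
      ((v i * m i)%:E + (v i * (1 - m i))%:E))%E.
    by apply: eq_esum => i _; rewrite -EFinD; congr (_%:E); ring.
  rewrite esumD in E1; first last.
  - move=> i _; rewrite lee_fin mulr_ge0 // subr_ge0; by case/andP: (m01 i).
  - move=> i _; rewrite lee_fin mulr_ge0 //; by case/andP: (m01 i).
  rewrite hsv hsum in E1.
  set X := (\esum_(i in [set: nat]) (v i * (1 - m i))%:E)%E in E1.
  have X0 : X = 0%E.
    have : (1 - 1 = 1 + X - 1)%E by rewrite -E1.
    by rewrite subee // (addeC 1%E) addeK.
  move=> i.
  have nn : forall l, [set: nat] l -> (0 <= (v l * (1 - m l))%:E)%E.
    move=> l _; rewrite lee_fin mulr_ge0 // subr_ge0; by case/andP: (m01 l).
  have hX := esum_ge1 _ [set: nat] (fun l => (v l * (1 - m l))%:E)%E i I nn.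
  rewrite /= -/X X0 lee_fin in hX.
  have := hv i; have := m01 i; move: (v i) (m i) hX => a b hX /andP[b0 b1] a0.
  nra.
move=> s s01 i.
have E := caseB_eq s i s01 (ntk i).
have nn1 : forall j, (0 <= Mmean p i j * (1 - s j)%:E)%E.
  by move=> j; rewrite mule_ge0 ?Mmean_ge0 // lee_fin subr_ge0; case/andP: (s01 j).
have nn2 : forall j, (0 <= Mmean p i j * (s j)%:E)%E.
  by move=> j; rewrite mule_ge0 ?Mmean_ge0 // lee_fin; case/andP: (s01 j).
have Y : (\esum_(j in [set: nat]) (Mmean p i j * (1 - s j)%:E) +
          \esum_(j in [set: nat]) (Mmean p i j * (s j)%:E) = 1)%E.
  rewrite -esumD; first last.
  - by move=> j _; exact: nn2.
  - by move=> j _; exact: nn1.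
  transitivity (Mrow p i); last by rewrite hm hm1.
  rewrite /Mrow; apply: eq_esum => j _.
  have [a0 a1] : (0 <= (1 - s j)%:E)%E /\ (0 <= (s j)%:E)%E.
    by case/andP: (s01 j) => ? ?; rewrite !lee_fin subr_ge0.
  by rewrite -ge0_muleDr // -EFinD subrK mule1.
rewrite -E in Y.
set Z := (\esum_(j in [set: nat]) (Mmean p i j * (s j)%:E))%E in Y *.
have : ((1 - Fgen p s i)%:E + Z - (1 - Fgen p s i)%:E = 1 - (1 - Fgen p s i)%:E)%E.
  by rewrite Y.
rewrite (addeC _ Z) addeK // => ->.
by rewrite -EFinB; congr (_%:E); ring.
Qed.

Hypothesis Mfin : forall i, (Mrow p i < +oo)%E.
Hypothesis irr : irreducible p.
Variables (u : nat -> R) (Bu : R).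
Hypothesis hu : forall i, 0 < u i.
Hypothesis huM : forall i,
  (\esum_(j in [set: nat]) Mmean p i j * (u j)%:E)%E = (u i)%:E.
Hypothesis hB : forall i, u i <= Bu.
Hypothesis tail : forall eps : R, 0 < eps -> exists N0 : nat, forall N, (N0 <= N)%N ->
  forall i, (\esum_(j in [set j | (N < j)%N]) Mmean p i j <= eps%:E * Mrow p i)%E.

Lemma all_die j : dies j.
Proof.
have [l dl] := exists_dies.
have [n [_ hn]] := irr l j.
exact: dies_path dl n j hn.
Qed.

Lemma dies_fin N0 d : 0 < d -> exists n0, forall n, (n0 <= n)%N ->
  forall j, (j <= N0)%N -> q n j < d.
Proof.
move=> d0; elim: N0 => [|N IH].
  have [n hn] := all_die 0 d d0; exists n => m nm j; rewrite leqn0 => /eqP ->.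
  exact: le_lt_trans (@q_decr n m 0%N nm) hn.
have [n1 h1] := IH; have [n2 h2] := all_die N.+1 d d0.
exists (maxn n1 n2) => m hm j; rewrite leq_eqVlt => /orP[/eqP ->|].
  apply: le_lt_trans (@q_decr n2 m N.+1 _) h2; exact: leq_trans (leq_maxr _ _) hm.
rewrite ltnS; apply: h1; exact: leq_trans (leq_maxl _ _) hm.
Qed.

Lemma Mrow_ge0 i : (0 <= Mrow p i)%E.
Proof. by apply: esum_ge0 => j _; exact: Mmean_ge0. Qed.

Lemma Mrow_bound : exists C, 0 < C /\ forall i, (Mrow p i <= C%:E)%E.
Proof.
have h2 : (0 : R) < 1 / 2 by rewrite divr_gt0.
have [N1 hN1] := tail (1/2) h2.
have [mu [mu0 hmu]] : exists mu, 0 < mu /\ forall j, (j <= N1)%N -> mu <= u j.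
  elim: (N1) => [|N [mu [mu0 hmu]]].
    by exists (u 0); split => // j; rewrite leqn0 => /eqP ->.
  exists (Order.min mu (u N.+1)); split; first by rewrite lt_min mu0 hu.
  move=> j; rewrite leq_eqVlt => /orP[/eqP ->|]; first by rewrite ge_min lexx orbT.
  by rewrite ltnS => /hmu h; rewrite ge_min h.
have Bu0 : 0 < Bu by apply: lt_le_trans (hu 0) (hB 0).
exists (2 * Bu / mu); split; first by rewrite divr_gt0 // mulr_gt0.
move=> i.
set B := [set j | (N1 < j)%N].
have hID := esumID B [set: nat] (fun j => Mmean p i j) (fun j _ => Mmean_ge0 i j).
rewrite setTI -/(Mrow p i) in hID.
set X := (\esum_(j in [set: nat] `&` ~` B) Mmean p i j)%E in hID.
set Y := (\esum_(j in B) Mmean p i j)%E in hID.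
have hY : (Y <= (1/2)%:E * Mrow p i)%E by apply: hN1.
have hX : (X * mu%:E <= (u i)%:E)%E.
  rewrite -huM -esumZr ?(ltW mu0) //; last by move=> j; exact: Mmean_ge0.
  apply: (@le_trans _ _ (\esum_(j in [set: nat] `&` ~` B) (Mmean p i j * (u j)%:E))%E).
    apply: le_esum => j [_ /= hj]; apply: lee_wpmul2l; first exact: Mmean_ge0.
    by rewrite lee_fin; apply: hmu; rewrite leqNgt; apply/negP.
  apply: esum_sub => // j _; rewrite mule_ge0 ?Mmean_ge0 // lee_fin; exact: ltW.
have X0 : (0 <= X)%E by apply: esum_ge0 => j _; exact: Mmean_ge0.
have Y0 : (0 <= Y)%E by apply: esum_ge0 => j _; exact: Mmean_ge0.
have Mf : Mrow p i \is a fin_num by rewrite ge0_fin_numE ?Mfin // Mrow_ge0.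
have Xf : X \is a fin_num.
  rewrite ge0_fin_numE // (le_lt_trans _ (Mfin i)) // hID leeDr //.
have Yf : Y \is a fin_num.
  rewrite ge0_fin_numE // (le_lt_trans _ (Mfin i)) // hID leeDl //.
rewrite -(fineK Mf) -(fineK Xf) -(fineK Yf) in hID hY hX X0.
rewrite -(fineK Mf) lee_fin.
rewrite -EFinD in hID; case: hID => hID.
rewrite -EFinM lee_fin in hY; rewrite -EFinM lee_fin in hX; rewrite lee_fin in X0.
move: (fine (Mrow p i)) (fine X) (fine Y) hID hY hX X0 => M x y hID hY hX X0.
rewrite ler_pdivlMr //.
have : (2 * x - M) * mu >= 0 by rewrite mulr_ge0 ?(ltW mu0) // subr_ge0; lra.
have := hB i; nra.
Qed.

Lemma uniform eps : 0 < eps -> exists N : nat, forall n : nat, (N <= n)%N ->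
    forall (i : nat) (s : nat -> R), (forall j, 0 < s j <= 1) ->
      `|1 - Fiter p n s i| < eps.
Proof.
move=> e0.
have [C [C0 hC]] := Mrow_bound.
have e20 : 0 < eps / (4 * C) by rewrite divr_gt0 // mulr_gt0.
move: e20; set e2 := eps / (4 * C) => e20.
have [N2 hN2] := tail e2 e20.
have [n0 hn0] := dies_fin N2 e2 e20.
exists n0.+1 => n hn i s hs.
have s01 : unit01 s by move=> j; case/andP: (hs j) => a b; rewrite (ltW a) b.
case: n hn => [//|m] hm; rewrite ltnS in hm.
have hF := Fiter_mono m.+1 s s01 i.
have /andP[F0 F1] := Fiter01 m.+1 s s01 i.
rewrite ger0_norm ?subr_ge0 //.
apply: (@le_lt_trans _ _ (q m.+1 i)); first by rewrite /q lerB.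
have hq := q_step m i.
have q0 : forall m l, 0 <= q m l by move=> m' l; case/andP: (q01 m' l).
set B := [set j | (N2 < j)%N].
rewrite (esumID B) in hq; last by move=> j _; rewrite mule_ge0 ?Mmean_ge0 // lee_fin q0.
rewrite setTI in hq.
have h1 : (\esum_(j in B) (Mmean p i j * (q m j)%:E) <= (e2 * C)%:E)%E.
  apply: (@le_trans _ _ (\esum_(j in B) Mmean p i j)%E).
    apply: le_esum => j _; rewrite -[leRHS]mule1; apply: lee_wpmul2l.
      exact: Mmean_ge0.
    by rewrite lee_fin; case/andP: (q01 m j).
  apply: le_trans (hN2 N2 (leqnn _) i) _; rewrite EFinM.
  have e2E : (0 <= e2%:E)%E by rewrite lee_fin ltW.
  exact: (lee_wpmul2l e2E (hC i)).
have h2 : (\esum_(j in [set: nat] `&` ~` B) (Mmean p i j * (q m j)%:E) <= (C * e2)%:E)%E.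
  apply: (@le_trans _ _ (\esum_(j in [set: nat] `&` ~` B) (Mmean p i j * e2%:E))%E).
    apply: le_esum => j [_ hj]; apply: lee_wpmul2l; first exact: Mmean_ge0.
    rewrite lee_fin ltW //; apply: hn0 => //; rewrite leqNgt; apply/negP; exact: hj.
  rewrite esumZr ?(ltW e20) //; last by move=> j; exact: Mmean_ge0.
  rewrite (EFinM C e2).
  have e2E : (0 <= e2%:E)%E by rewrite lee_fin ltW.
  apply: (lee_wpmul2r e2E); apply: le_trans (hC i).
  apply: esum_sub => // j _; exact: Mmean_ge0.
have := le_trans hq (leeD h1 h2); rewrite -EFinD lee_fin => h.
apply: le_lt_trans h _.
have E : e2 * C = eps / 4.
  rewrite /e2 invfM mulrA mulrAC -mulrA mulfV ?mulr1 //; exact: lt0r_neq0.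
rewrite [C * e2]mulrC E; lra.
Qed.

End GW.

Theorem lemma4 (R : realType) (p : nat -> (nat -> nat) -> R) :
  offspring_law p -> class_M1 p -> ~ F_linear p ->
  forall eps : R, 0 < eps -> exists N : nat, forall n : nat, (N <= n)%N ->
    forall (i : nat) (s : nat -> R), (forall j, 0 < s j <= 1) ->
      `|1 - Fiter p n s i| < eps.
Proof.
move=> [p0 pfin psum] [Mfin [[irr _ _ _ _] [[v [u [hv hu hvM huM [_ hsv [Bu hB]]]]] [tail _]]]] hnl.
exact: (@uniform R p p0 pfin psum v hv hvM hsv hnl Mfin irr u Bu hu huM hB tail).
Qed.
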